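(* For every $t=0,1,\dots,T-2$ and every $z_m\in Z_\theta$ with $z_m\le I_t$, one has $H_t(z_m)\ge H_t(I_t)$.
   Context: Model. Fix an integer horizon $T\ge 2$, a discount factor $\alpha\in(0,1]$, and for $t=0,\dots,T-1$: unit ordering costs $c_t\in\mathbb R$, a salvage coefficient $c_T\in\mathbb R$, setup costs $K_t\ge 0$, functions $G_t:\mathbb R\to\mathbb R$, and independent nonnegative random demands $D_0,\dots,D_{T-1}$ with right-continuous distribution functions $F_t$ and finite means; all expectations appearing are assumed finite. Put $C_t(y)=(c_t-\alpha c_{t+1})y+G_t(y)+\alpha c_{t+1}E[D_t]$. Standing assumptions: (i) each $C_t$ is convex with $C_t(y)\to+\infty$ as $|y|\to\infty$; (ii) $K_t\ge \alpha K_{t+1}$ for $t=0,\dots,T-2$. Grid construction. Fix $\theta>0$, let $z_m=m\theta$ ($m\in\mathbb Z$), $Z_\theta=\{z_m:m\in\mathbb Z\}$, and $f_t(n)=F_t(z_{n+1})-F_t(z_n)$ for integers $n\ge -1$. Let $C^m_t=\min\{y: C_t(y)=\min_{x}C_t(x)\}$; with $n_0$ the integer such that $z_{n_0}<C^m_t\le z_{n_0+1}$, let $S^U_t=\min\{z_m\in Z_\theta: z_m\ge C^m_t,\ C_t(z_m)>C_t(z_{n_0})+K_t\}$. Let $s_{T-1}$ be a point with $s_{T-1}\le C^m_{T-1}$ and $C_{T-1}(s_{T-1})=C_{T-1}(C^m_{T-1})+K_{T-1}$, and $\bar I_{T-1}=s_{T-1}$. For $t=T-2,\dots,0$: $I_t=\max\{z_m\in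 Z_\theta: z_m<\min(\bar I_{t+1}-\theta,\,C^m_t)\}$, $\bar I_t=\max\{z_m\in Z_\theta: z_m\le I_t,\ C_t(z_m)>C_t(I_t)+K_t\}+\theta$. Set $H_{T-1}=C_{T-1}$, $S_{T-1}=C^m_{T-1}$. Whenever $H_t,S_t,s_t$ are defined, $V_t(y)=H_t(S_t)+K_t$ for $y<s_t$ and $V_t(y)=H_t(y)$ for $y\ge s_t$. For $t=T-2,\dots,0$: $H_t(y)=C_t(y)+\alpha\sum_{n=-1}^{\infty}V_{t+1}(y-z_n)f_t(n)$; $S_t=\max\{z_m\in Z_\theta: I_t\le z_m\le S^U_t,\ H_t(z_m)=\min\{H_t(z_n): z_n\in Z_\theta,\ I_t\le z_n\le S^U_t\}\}$; $s_t=S_t$ if $K_t=0$, else $s_t=\min\{z_m\in Z_\theta:\bar I_t\le z_m\le S_t,\ H_t(z_m)\le H_t(S_t)+K_t\}$. *)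

(* Defs.v *)
From Stdlib Require Import Reals Lra ZArith ClassicalEpsilon.
From Coquelicot Require Import Coquelicot.
Open Scope R_scope.

Record Model := mkModel {
  T : nat;
  alpha : R;
  c : nat -> R;                   (* c t = unit ordering cost, c T = salvage coeff *)
  K : nat -> R;
  G : nat -> R -> R;
  F : nat -> R -> R;              (* distribution function of demand D_t *)
  ED : nat -> R;
  theta : R
}.

(* Choice operators (classical).  Each is used only on predicates that
   have exactly one witness under the standing assumptions. *)
Definition zmax (P : Z -> Prop) : Z :=
  epsilon (inhabits 0%Z) (fun m => P m /\ forall k, P k -> (k <= m)%Z).
Definition zmin (P : Z -> Prop) : Z :=
  epsilon (inhabits 0%Z) (fun m => P m /\ forall k, P k -> (m <= k)%Z).
Definition zchoose (P : Z -> Prop) : Z := epsilon (inhabits 0%Z) P.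
Definition rmin (P : R -> Prop) : R :=
  epsilon (inhabits 0) (fun y => P y /\ forall x, P x -> y <= x).
Definition rchoose (P : R -> Prop) : R := epsilon (inhabits 0) P.

Section Construction.
Variable M : Model.

Definition z (m : Z) : R := IZR m * theta M.

Definition f (t : nat) (n : Z) : R := F M t (z (n + 1)) - F M t (z n).

Definition C (t : nat) (y : R) : R :=
  (c M t - alpha M * c M (t + 1)) * y + G M t y + alpha M * c M (t + 1) * ED M t.

Definition Cm (t : nat) : R := rmin (fun y => forall x, C t y <= C t x).

Definition n0 (t : nat) : Z := zchoose (fun n => z n < Cm t /\ Cm t <= z (n + 1)).

Definition SU (t : nat) : R :=
  z (zmin (fun m => Cm t <= z m /\ C t (z m) > C t (z (n0 t)) + K M t)).

Definition sTm1 : R :=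
  let t := (T M - 1)%nat in
  rchoose (fun s => s <= Cm t /\ C t s = C t (Cm t) + K M t).

Definition Ifun (t : nat) (Ibar_next : R) : R :=
  z (zmax (fun m => z m < Rmin (Ibar_next - theta M) (Cm t))).

Definition Ibarfun (t : nat) (It : R) : R :=
  z (zmax (fun m => z m <= It /\ C t (z m) > C t It + K M t)) + theta M.

(* Ibar_aux k = \bar I_{T-1-k} *)
Fixpoint Ibar_aux (k : nat) : R :=
  match k with
  | O => sTm1
  | S k' => let t := (T M - 1 - k)%nat in Ibarfun t (Ifun t (Ibar_aux k'))
  end.

Definition Ibar (t : nat) : R := Ibar_aux (T M - 1 - t).
Definition I (t : nat) : R := Ifun t (Ibar (t + 1)).

Definition Vof (Kt : R) (HSs : (R -> R) * R * R) (y : R) : R :=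
  let '(Hf, Sv, sv) := HSs in
  if Rlt_dec y sv then Hf Sv + Kt else Hf y.

(* The discretized expectation term: sum_{n>=-1} V(y - z_n) f_t(n),
   reindexed by k : nat with n = k - 1. *)
Definition Eterm (t : nat) (V : R -> R) (y : R) (k : nat) : R :=
  V (y - z (Z.of_nat k - 1)) * f t (Z.of_nat k - 1).

Definition step (t : nat) (next : (R -> R) * R * R) : (R -> R) * R * R :=
  let V := Vof (K M (t + 1)) next in
  let H := fun y => C t y + alpha M * Series (Eterm t V y) in
  let St := z (zmax (fun m => I t <= z m <= SU t /\
                 forall n, I t <= z n <= SU t -> H (z m) <= H (z n))) in
  let st := if Req_EM_T (K M t) 0 then St
            else z (zmin (fun m => Ibar t <= z m <= St /\ H (z m) <= H St + K M t)) in
  (H, St, st).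

(* HSs_aux k = (H_{T-1-k}, S_{T-1-k}, s_{T-1-k}) *)
Fixpoint HSs_aux (k : nat) : (R -> R) * R * R :=
  match k with
  | O => (C (T M - 1), Cm (T M - 1), sTm1)
  | S k' => step (T M - 1 - k)%nat (HSs_aux k')
  end.

Definition HSs (t : nat) : (R -> R) * R * R := HSs_aux (T M - 1 - t).
Definition H (t : nat) : R -> R := fst (fst (HSs t)).
Definition Sopt (t : nat) : R := snd (fst (HSs t)).
Definition sopt (t : nat) : R := snd (HSs t).
Definition V (t : nat) : R -> R := Vof (K M t) (HSs t).

End Construction.

Definition convex_fun (g : R -> R) : Prop :=
  forall x y l, 0 <= l <= 1 -> g (l * x + (1 - l) * y) <= l * g x + (1 - l) * g y.

(* F is the distribution function of a nonnegative random variable with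
   finite mean m (E[D] = int_0^oo (1 - F)). *)
Definition nonneg_distribution (Fd : R -> R) (m : R) : Prop :=
  (forall x y, x <= y -> Fd x <= Fd y) /\
  (forall x, filterlim Fd (at_right x) (locally (Fd x))) /\
  (forall x, x < 0 -> Fd x = 0) /\
  filterlim Fd (Rbar_locally p_infty) (locally 1) /\
  is_RInt_gen (fun x => 1 - Fd x) (at_point 0) (Rbar_locally p_infty) m.

Definition standing (M : Model) : Prop :=
  (2 <= T M)%nat /\
  0 < alpha M <= 1 /\
  0 < theta M /\
  (forall t, (t <= T M - 1)%nat -> 0 <= K M t) /\
  (forall t, (t <= T M - 1)%nat -> nonneg_distribution (F M t) (ED M t)) /\
  (forall t, (t <= T M - 1)%nat ->
     convex_fun (C M t) /\
     filterlim (C M t) (Rbar_locally p_infty) (Rbar_locally p_infty) /\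
     filterlim (C M t) (Rbar_locally m_infty) (Rbar_locally p_infty)) /\
  (forall t, (t <= T M - 2)%nat -> K M t >= alpha M * K M (t + 1)) /\
  (* all expectations appearing are finite *)
  (forall t y, (t <= T M - 2)%nat ->
     ex_series (fun k => Rabs (Eterm M t (V M (t + 1)) y k))).

(* Main.v *)
Require Import Defs.
From Stdlib Require Import Reals Lra Lia ZArith ClassicalEpsilon Classical.
From Coquelicot Require Import Coquelicot.
Open Scope R_scope.

Lemma coerc_p (f : R -> R) : filterlim f (Rbar_locally p_infty) (Rbar_locally p_infty) ->
  forall B, exists N, forall y, N < y -> B < f y.
Proof.
  intros H B. specialize (H (fun y => B < y)).
  destruct (H (ex_intro _ B (fun y Hy => Hy))) as [N HN]. exists N. exact HN.
Qed.

Lemma coerc_m (f : R -> R) : filterlim f (Rbar_locally m_infty) (Rbar_locally p_infty) ->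
  forall B, exists N, forall y, y < N -> B < f y.
Proof.
  intros H B. specialize (H (fun y => B < y)).
  destruct (H (ex_intro _ B (fun y Hy => Hy))) as [N HN]. exists N. exact HN.
Qed.

Lemma zmax_ex (P : Z -> Prop) (m0 B : Z) : P m0 -> (forall m, P m -> (m <= B)%Z) ->
  exists m, P m /\ forall k, P k -> (k <= m)%Z.
Proof.
  intros H0 HB.
  assert (Hm : (m0 <= B)%Z) by auto.
  assert (Hgen : forall n : nat, forall B, (B = m0 + Z.of_nat n)%Z -> (forall m, P m -> (m <= B)%Z) ->
     exists m, P m /\ forall k, P k -> (k <= m)%Z).
  { induction n as [|n IH]; intros B' EB HB'.
    - exists m0. split; [exact H0|]. intros k Hk. specialize (HB' k Hk). lia.
    - destruct (classic (P B')) as [HP|HP].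
      + exists B'. split; auto.
      + apply (IH (B' - 1)%Z). lia. intros m Hm'. specialize (HB' m Hm').
        assert (m <> B') by (intro; subst; contradiction). lia. }
  apply (Hgen (Z.to_nat (B - m0)) B). lia. exact HB.
Qed.

Lemma zmin_ex (P : Z -> Prop) (m0 B : Z) : P m0 -> (forall m, P m -> (B <= m)%Z) ->
  exists m, P m /\ forall k, P k -> (m <= k)%Z.
Proof.
  intros H0 HB.
  destruct (zmax_ex (fun m => P (- m)%Z) (- m0)%Z (- B)%Z) as [m [Hm Hk]].
  - rewrite Z.opp_involutive. exact H0.
  - intros m Hm. specialize (HB _ Hm). lia.
  - exists (- m)%Z. split; auto. intros k Hk'. assert (P (- - k)%Z) by (rewrite Z.opp_involutive; auto).
    specialize (Hk _ H). lia.
Qed.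

Lemma argmin_ex (g : Z -> R) (a : Z) (n : nat) :
  exists m, (a <= m <= a + Z.of_nat n)%Z /\ forall k, (a <= k <= a + Z.of_nat n)%Z -> g m <= g k.
Proof.
  induction n as [|n IH].
  - exists a. split. lia. intros k Hk. assert (k = a) by lia. subst. lra.
  - destruct IH as [m [Hm Hk]].
    destruct (Rle_lt_dec (g m) (g (a + Z.of_nat (S n))%Z)) as [L|L].
    + exists m. split. lia. intros k Hk'.
      destruct (Z.eq_dec k (a + Z.of_nat (S n))%Z) as [E|E]. subst; lra.
      apply Hk. lia.
    + exists (a + Z.of_nat (S n))%Z. split. lia. intros k Hk'.
      destruct (Z.eq_dec k (a + Z.of_nat (S n))%Z) as [E|E]. subst; lra.
      specialize (Hk k ltac:(lia)). lra.
Qed.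

Lemma conv_up (f : R -> R) : (forall x y l, 0 <= l <= 1 -> f (l * x + (1 - l) * y) <= l * f x + (1 - l) * f y) ->
  forall x h, 0 <= h <= 1 ->
  Rabs (f (x + h) - f x) <= h * (Rabs (f (x - 1) - f x) + Rabs (f (x + 1) - f x)).
Proof.
  intros Hc x h Hh.
  assert (U : f (x + h) <= (1 - h) * f x + h * f (x + 1)).
  { pose proof (Hc x (x + 1) (1 - h) ltac:(lra)) as P.
    replace ((1 - h) * x + (1 - (1 - h)) * (x + 1)) with (x + h) in P by ring.
    replace (1 - (1 - h)) with h in P by ring. exact P. }
  set (l := h / (1 + h)).
  assert (El : l * (1 + h) = h) by (unfold l; field; lra).
  assert (Hl : 0 <= l <= 1).
  { split. unfold l. apply Rdiv_le_0_compat; lra.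
    apply (Rmult_le_reg_r (1 + h)). lra. rewrite El. lra. }
  assert (Lo : f x <= l * f (x - 1) + (1 - l) * f (x + h)).
  { pose proof (Hc (x - 1) (x + h) l Hl) as P.
    replace (l * (x - 1) + (1 - l) * (x + h)) with (x + h - l * (1 + h)) in P by ring.
    rewrite El in P. replace (x + h - h) with x in P by ring. exact P. }
  assert (Lo2 : f x * (1 + h) <= h * f (x - 1) + f (x + h)).
  { apply (Rmult_le_compat_r (1 + h)) in Lo; [|lra].
    replace ((l * f (x - 1) + (1 - l) * f (x + h)) * (1 + h)) with
      ((l * (1 + h)) * f (x - 1) + (1 + h - l * (1 + h)) * f (x + h)) in Lo by ring.
    rewrite El in Lo. lra. }
  set (a := f (x - 1) - f x) in *. set (b := f (x + 1) - f x) in *.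
  assert (Ha := Rle_abs a). assert (Ha' := Rabs_pos a). assert (Hb := Rle_abs b).
  assert (Hb' := Rabs_pos b). assert (Ha2 : - a <= Rabs a) by (rewrite <- Rabs_Ropp; apply Rle_abs).
  apply Rabs_le. split.
  - assert (f (x + h) - f x >= - h * a) by (unfold a; nra). nra.
  - assert (f (x + h) - f x <= h * b) by (unfold b; nra). nra.
Qed.
Definition cvx (f : R -> R) := forall x y l, 0 <= l <= 1 -> f (l * x + (1 - l) * y) <= l * f x + (1 - l) * f y.

Lemma conv_lip (f : R -> R) : cvx f -> forall x h, Rabs h <= 1 ->
  Rabs (f (x + h) - f x) <= Rabs h * (Rabs (f (x - 1) - f x) + Rabs (f (x + 1) - f x)).
Proof.
  intros Hc x h Hh. destruct (Rle_lt_dec 0 h) as [P|P].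
  - rewrite (Rabs_right h) by lra. apply conv_up; auto. rewrite Rabs_right in Hh; lra.
  - set (g := fun y => f (- y)).
    assert (Hg : cvx g).
    { intros a b l Hl. unfold g. replace (- (l * a + (1 - l) * b)) with (l * (-a) + (1 - l) * (-b)) by ring. auto. }
    pose proof (conv_up g Hg (- x) (- h)) as Q. rewrite Rabs_left in Hh by lra.
    specialize (Q ltac:(lra)). unfold g in Q.
    replace (- (- x + - h)) with (x + h) in Q by ring. replace (- - x) with x in Q by ring.
    replace (- (- x - 1)) with (x + 1) in Q by ring. replace (- (- x + 1)) with (x - 1) in Q by ring.
    rewrite (Rabs_left h) by lra. rewrite (Rplus_comm (Rabs (f (x - 1) - f x))). exact Q.
Qed.

Lemma conv_cont (f : R -> R) : cvx f -> forall x, continuity_pt f x.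
Proof.
  intros Hc x eps Heps.
  set (L := Rabs (f (x - 1) - f x) + Rabs (f (x + 1) - f x)).
  assert (HL : 0 <= L) by (unfold L; pose proof (Rabs_pos (f (x - 1) - f x)); pose proof (Rabs_pos (f (x + 1) - f x)); lra).
  exists (Rmin 1 (eps / (L + 1))). split.
  - apply Rmin_pos. lra. apply Rdiv_lt_0_compat; lra.
  - intros y [_ Hy]. simpl in *. unfold R_dist in *.
    pose proof (Rmin_l 1 (eps / (L + 1))). pose proof (Rmin_r 1 (eps / (L + 1))).
    pose proof (conv_lip f Hc x (y - x) ltac:(lra)) as Q. fold L in Q.
    replace (x + (y - x)) with y in Q by ring.
    assert (Rabs (y - x) * (L + 1) < eps).
    { apply Rlt_le_trans with (eps / (L + 1) * (L + 1)).
      apply Rmult_lt_compat_r; lra. right; field; lra. }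
    pose proof (Rabs_pos (y - x)). nra.
Qed.

Lemma least_min (f : R -> R) : cvx f ->
  filterlim f (Rbar_locally p_infty) (Rbar_locally p_infty) ->
  filterlim f (Rbar_locally m_infty) (Rbar_locally p_infty) ->
  exists y, (forall x, f y <= f x) /\ forall y', (forall x, f y' <= f x) -> y <= y'.
Proof.
  intros Hc Hp Hm.
  destruct (coerc_p f Hp (f 0)) as [N1 HN1].
  destruct (coerc_m f Hm (f 0)) as [N2 HN2].
  set (a := Rmin N2 0 - 1). set (b := Rmax N1 0 + 1).
  pose proof (Rmin_l N2 0). pose proof (Rmin_r N2 0). pose proof (Rmax_l N1 0). pose proof (Rmax_r N1 0).
  destruct (continuity_ab_min f a b ltac:(unfold a, b; lra) (fun c _ => conv_cont f Hc c)) as [mx [Hmx Hab]].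
  assert (Gm : forall x, f mx <= f x).
  { intros x. destruct (Rle_lt_dec a x) as [A|A]; destruct (Rle_lt_dec x b) as [B|B].
    - apply Hmx; lra.
    - pose proof (HN1 x ltac:(unfold b in B; lra)). pose proof (Hmx 0 ltac:(unfold a, b; lra)). lra.
    - pose proof (HN2 x ltac:(unfold a in A; lra)). pose proof (Hmx 0 ltac:(unfold a, b; lra)). lra.
    - pose proof (HN2 x ltac:(unfold a in A; lra)). pose proof (Hmx 0 ltac:(unfold a, b; lra)). lra. }
  set (S := fun y => forall x, f y <= f x).
  assert (Sa : forall y, S y -> a <= y).
  { intros y Sy. destruct (Rle_lt_dec a y) as [A|A]; auto.
    pose proof (HN2 y ltac:(unfold a in A; lra)). pose proof (Sy 0). lra. }
  set (E := fun u => S (- u)).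
  assert (bE : bound E).
  { exists (- a). intros u Eu. pose proof (Sa _ Eu). lra. }
  assert (nE : exists u, E u).
  { exists (- mx). unfold E, S. rewrite Ropp_involutive. exact Gm. }
  destruct (completeness E bE nE) as [l [Ub Lub]].
  assert (Lo : forall y, S y -> - l <= y).
  { intros y Sy. assert (E (- y)) by (unfold E; rewrite Ropp_involutive; exact Sy).
    pose proof (Ub _ H3). lra. }
  exists (- l). split; [|exact Lo].
  destruct (classic (S (- l))) as [Sl|Sl]; [exact Sl|].
  exfalso. apply not_all_ex_not in Sl. destruct Sl as [x Hx]. apply Rnot_le_lt in Hx.
  pose proof (Gm x) as G1.
  destruct (conv_cont f Hc (- l) (f (- l) - f mx) ltac:(lra)) as [alp [Halp Hal]].
  destruct (classic (exists u, E u /\ l - alp < u)) as [[u [Eu Hu]]|NE].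
  - pose proof (Ub _ Eu). unfold E in Eu.
    destruct (Req_dec (- u) (- l)) as [Q|Q].
    + rewrite Q in Eu. pose proof (Eu x). lra.
    + assert (Dd : Rabs (- u - - l) < alp) by (rewrite Rabs_right by lra; lra).
      specialize (Hal (- u) (conj (conj Logic.I (not_eq_sym Q)) Dd)).
      simpl in Hal. unfold R_dist in Hal. pose proof (Eu mx) as E1.
      assert (A1 : f (- l) - f (- u) <= Rabs (f (- u) - f (- l))).
      { rewrite <- Rabs_Ropp. replace (- (f (- u) - f (- l))) with (f (- l) - f (- u)) by ring. apply Rle_abs. }
      lra.
  - assert (is_upper_bound E (l - alp)).
    { intros u Eu. destruct (Rle_lt_dec u (l - alp)) as [A|A]; auto. exfalso. apply NE. eauto. }
    pose proof (Lub _ H3). lra.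
Qed.

Require Import Defs.

Section Mod.
Variable M : Model.
Hypothesis Hth : 0 < theta M.

Lemma z_le a b : z M a <= z M b <-> (a <= b)%Z.
Proof.
  unfold z. split; intro H.
  - apply le_IZR. apply (Rmult_le_reg_r (theta M)); auto.
  - apply Rmult_le_compat_r. lra. apply IZR_le; auto.
Qed.

Lemma z_lt a b : z M a < z M b <-> (a < b)%Z.
Proof.
  unfold z. split; intro H.
  - apply lt_IZR. apply (Rmult_lt_reg_r (theta M)); auto.
  - apply Rmult_lt_compat_r. lra. apply IZR_lt; auto.
Qed.

Lemma z_S a : z M (a + 1) = z M a + theta M.
Proof. unfold z. rewrite plus_IZR. ring. Qed.

Lemma z_above x : exists m, x < z M m.
Proof.
  exists (up (x / theta M)). destruct (archimed (x / theta M)) as [A _]. unfold z.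
  replace x with (x / theta M * theta M) at 1 by (field; lra).
  apply Rmult_lt_compat_r; lra.
Qed.

Lemma z_below x : exists m, z M m < x.
Proof.
  destruct (z_above (- x)) as [m Hm]. exists (- m)%Z. unfold z in *. rewrite opp_IZR. lra.
Qed.

Lemma zmax_spec (P : Z -> Prop) : (exists m, P m /\ forall k, P k -> (k <= m)%Z) ->
  P (zmax P) /\ forall k, P k -> (k <= zmax P)%Z.
Proof. intros H. unfold zmax. apply (epsilon_spec (inhabits 0%Z) _ H). Qed.

Lemma zmin_spec (P : Z -> Prop) : (exists m, P m /\ forall k, P k -> (m <= k)%Z) ->
  P (zmin P) /\ forall k, P k -> (zmin P <= k)%Z.
Proof. intros H. unfold zmin. apply (epsilon_spec (inhabits 0%Z) _ H). Qed.

Lemma zmax_lt_spec (a : R) : z M (zmax (fun m => z M m < a)) < a.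
Proof.
  destruct (z_below a) as [m0 H0]. destruct (z_above a) as [B HB].
  destruct (zmax_ex (fun m => z M m < a) m0 B H0) as [m Hm].
  { intros m Hm. apply z_le. lra. }
  apply (zmax_spec _ (ex_intro _ m Hm)).
Qed.

Lemma Ifun_spec t Ib : Ifun M t Ib < Rmin (Ib - theta M) (Cm M t).
Proof. unfold Ifun. apply zmax_lt_spec. Qed.

Lemma Ibarfun_spec t mI :
  0 <= K M t -> filterlim (C M t) (Rbar_locally m_infty) (Rbar_locally p_infty) ->
  exists mb, Ibarfun M t (z M mI) = z M mb /\ (mb <= mI)%Z.
Proof.
  intros HK Hm. unfold Ibarfun.
  set (Q := fun m => z M m <= z M mI /\ C M t (z M m) > C M t (z M mI) + K M t).
  destruct (coerc_m _ Hm (C M t (z M mI) + K M t)) as [N HN].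
  destruct (z_below (Rmin N (z M mI))) as [m0 H0].
  pose proof (Rmin_l N (z M mI)). pose proof (Rmin_r N (z M mI)).
  destruct (zmax_ex Q m0 mI) as [q Hq].
  { split. lra. apply Rlt_gt, HN. lra. }
  { intros m [A _]. apply z_le; auto. }
  destruct (zmax_spec Q (ex_intro _ q Hq)) as [[A B] _].
  exists (zmax Q + 1)%Z. rewrite z_S. split; auto.
  assert (zmax Q <> mI) by (intro E; rewrite E in B; lra).
  apply z_le in A. lia.
Qed.

End Mod.

Section Mod2.
Variable M : Model.
Hypothesis Hth : 0 < theta M.

Lemma core t (Hf : R -> R) :
  0 <= K M t ->
  filterlim (C M t) (Rbar_locally p_infty) (Rbar_locally p_infty) ->
  filterlim (C M t) (Rbar_locally m_infty) (Rbar_locally p_infty) ->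
  Ibar M t = Ibarfun M t (I M t) ->
  let St := z M (zmax (fun m => I M t <= z M m <= SU M t /\
                 forall n, I M t <= z M n <= SU M t -> Hf (z M m) <= Hf (z M n))) in
  Ibar M t <= (if Req_EM_T (K M t) 0 then St
            else z M (zmin (fun m => Ibar M t <= z M m <= St /\ Hf (z M m) <= Hf St + K M t))).
Proof.
  intros HK Hp Hm EIb St.
  assert (HI : exists mI, I M t = z M mI) by (unfold I, Ifun; eauto).
  destruct HI as [mI EI].
  destruct (Ibarfun_spec M Hth t mI HK Hm) as [mb [Eb Hb]].
  rewrite EI in EIb. rewrite Eb in EIb.
  assert (ItCm : I M t < Cm M t).
  { unfold I. eapply Rlt_le_trans. apply Ifun_spec; auto. apply Rmin_r. }
  set (U := fun m => Cm M t <= z M m /\ C M t (z M m) > C M t (z M (n0 M t)) + K M t).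
  assert (HU : exists m, U m /\ forall k, U k -> (m <= k)%Z).
  { destruct (coerc_p _ Hp (C M t (z M (n0 M t)) + K M t)) as [N HN].
    destruct (z_above M Hth (Rmax N (Cm M t))) as [m0 H0].
    pose proof (Rmax_l N (Cm M t)). pose proof (Rmax_r N (Cm M t)).
    destruct (z_below M Hth (Cm M t)) as [B HB].
    apply (zmin_ex U m0 B). split. lra. apply Rlt_gt, HN. lra.
    intros m [A _]. apply (z_le M Hth). lra. }
  destruct (zmin_spec U HU) as [[SU1 _] _].
  assert (ESU : SU M t = z M (zmin U)) by reflexivity.
  set (mU := zmin U) in *.
  assert (ImU : (mI <= mU)%Z) by (apply (z_le M Hth); lra).
  set (R0 := fun m => I M t <= z M m <= SU M t /\
                 forall n, I M t <= z M n <= SU M t -> Hf (z M m) <= Hf (z M n)).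
  assert (HR : exists m, R0 m /\ forall k, R0 k -> (k <= m)%Z).
  { destruct (argmin_ex (fun k => Hf (z M k)) mI (Z.to_nat (mU - mI))) as [ms [Hms Hmk]].
    rewrite Z2Nat.id in Hms, Hmk by lia.
    apply (zmax_ex R0 ms mU).
    - split. rewrite EI, ESU. split; apply (z_le M Hth); lia.
      intros n Hn. rewrite EI, ESU in Hn. destruct Hn as [A B].
      apply (z_le M Hth) in A. apply (z_le M Hth) in B. apply Hmk. lia.
    - intros m [[_ A] _]. rewrite ESU in A. apply (z_le M Hth); auto. }
  destruct (zmax_spec R0 HR) as [[[S1 S2] _] _].
  fold R0 in St. fold St in S1.
  assert (IbSt : Ibar M t <= St) by (rewrite EIb; rewrite EI in S1; apply (z_le M Hth) in S1; apply (z_le M Hth); lia).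
  destruct (Req_EM_T (K M t) 0) as [K0|K0]; auto.
  assert (HSt : exists mS, St = z M mS) by (unfold St; eauto). destruct HSt as [mS ES].
  set (W := fun m => Ibar M t <= z M m <= St /\ Hf (z M m) <= Hf St + K M t).
  assert (HW : exists m, W m /\ forall k, W k -> (m <= k)%Z).
  { apply (zmin_ex W mS mb).
    - split. rewrite <- ES. lra. rewrite <- ES. lra.
    - intros m [[A _] _]. rewrite EIb in A. apply (z_le M Hth); auto. }
  destruct (zmin_spec W HW) as [[[A _] _] _]. exact A.
Qed.

Lemma step_ge t next :
  0 <= K M t ->
  filterlim (C M t) (Rbar_locally p_infty) (Rbar_locally p_infty) ->
  filterlim (C M t) (Rbar_locally m_infty) (Rbar_locally p_infty) ->
  Ibar M t = Ibarfun M t (I M t) ->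
  Ibar M t <= snd (step M t next).
Proof.
  intros. exact (core t (fun y => C M t y + alpha M * Series (Eterm M t (Vof (K M (t + 1)) next) y)) H H0 H1 H2).
Qed.

End Mod2.

Lemma Ibar_eq (M : Model) t : (t + 1 <= T M - 1)%nat -> Ibar M t = Ibarfun M t (I M t).
Proof.
  intros Ht. unfold Ibar at 1, I.
  replace (T M - 1 - t)%nat with (S (T M - 1 - (t + 1))) by lia.
  cbn [Ibar_aux]. replace (T M - 1 - S (T M - 1 - (t + 1)))%nat with t by lia.
  reflexivity.
Qed.

Lemma H_eq (M : Model) t : (t + 1 <= T M - 1)%nat -> forall y,
  H M t y = C M t y + alpha M * Series (Eterm M t (Vof (K M (t + 1)) (HSs M (t + 1))) y).
Proof.
  intros Ht y. unfold H, HSs.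
  replace (T M - 1 - t)%nat with (S (T M - 1 - (t + 1))) by lia.
  cbn [HSs_aux]. replace (T M - 1 - S (T M - 1 - (t + 1)))%nat with t by lia.
  reflexivity.
Qed.

Lemma s_ge (M : Model) t : 0 < theta M -> (1 <= t <= T M - 1)%nat ->
  ((t <= T M - 2)%nat -> 0 <= K M t /\
     filterlim (C M t) (Rbar_locally p_infty) (Rbar_locally p_infty) /\
     filterlim (C M t) (Rbar_locally m_infty) (Rbar_locally p_infty)) ->
  Ibar M t <= snd (HSs M t).
Proof.
  intros Hth Ht Hc. unfold HSs.
  destruct (Nat.eq_dec t (T M - 1)) as [E|E].
  - unfold Ibar. rewrite E. replace (T M - 1 - (T M - 1))%nat with 0%nat by lia.
    cbn. lra.
  - destruct (Hc ltac:(lia)) as [HK [Hp Hm]].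
    pose proof (step_ge M Hth t (HSs_aux M (T M - 1 - (t + 1))) HK Hp Hm (Ibar_eq M t ltac:(lia))) as Q.
    replace (T M - 1 - t)%nat with (S (T M - 1 - (t + 1))) by lia.
    cbn [HSs_aux]. replace (T M - 1 - S (T M - 1 - (t + 1)))%nat with t by lia.
    exact Q.
Qed.

Theorem lemma3p1 (M : Model) :
  standing M ->
  forall t : nat, (t <= T M - 2)%nat ->
  forall m : Z, z M m <= I M t -> H M t (z M m) >= H M t (I M t).
Proof.
  intros [HT [Hal [Hth [HK [HF [HC [HKa Hex]]]]]]] t Ht m Hm.
  rewrite !(H_eq M t) by lia.
  assert (HI : I M t < Ibar M (t + 1) - theta M).
  { unfold I. eapply Rlt_le_trans. apply (Ifun_spec M Hth). apply Rmin_l. }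
  assert (Hs : Ibar M (t + 1) <= snd (HSs M (t + 1))).
  { apply s_ge; auto. lia. intros Ht'. split. apply HK; lia. destruct (HC (t + 1)%nat ltac:(lia)) as [_ X]. exact X. }
  assert (Eser : Series (Eterm M t (Vof (K M (t + 1)) (HSs M (t + 1))) (z M m)) =
                 Series (Eterm M t (Vof (K M (t + 1)) (HSs M (t + 1))) (I M t))).
  { apply Series_ext. intros j. unfold Eterm. f_equal.
    destruct (HSs M (t + 1)) as [[Hf Sv] sv]. cbn [snd] in Hs. unfold Vof.
    assert (Zj : - theta M <= z M (Z.of_nat j - 1)).
    { replace (- theta M) with (z M (-1)) by (unfold z; simpl; ring). apply z_le; auto. lia. }
    destruct (Rlt_dec (z M m - z M (Z.of_nat j - 1)) sv); [|exfalso; lra].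
    destruct (Rlt_dec (I M t - z M (Z.of_nat j - 1)) sv); [|exfalso; lra].
    reflexivity. }
  rewrite Eser. apply Rle_ge. apply Rplus_le_compat_r.
  destruct (HC t ltac:(lia)) as [Hcv [Hp Hmi]].
  destruct (least_min (C M t) Hcv Hp Hmi) as [y0 Hy0].
  assert (Hcm : forall x, C M t (Cm M t) <= C M t x).
  { intros x. unfold Cm, rmin.
    pose proof (epsilon_spec (inhabits 0) (fun y => (forall x, C M t y <= C M t x) /\
      forall x, (forall x', C M t x <= C M t x') -> y <= x) (ex_intro _ y0 Hy0)) as [P _].
    apply P. }
  assert (ICm : I M t < Cm M t).
  { unfold I. eapply Rlt_le_trans. apply (Ifun_spec M Hth). apply Rmin_r. }
  destruct (Req_dec (z M m) (I M t)) as [E|E]. rewrite E; lra.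
  set (a := z M m) in *. set (b := I M t) in *. set (cm := Cm M t) in *.
  set (l := (cm - b) / (cm - a)).
  assert (El : l * (cm - a) = cm - b) by (unfold l; field; lra).
  assert (Hl : 0 <= l <= 1).
  { split. unfold l. apply Rdiv_le_0_compat; lra.
    apply (Rmult_le_reg_r (cm - a)). lra. rewrite El. lra. }
  pose proof (Hcv a cm l Hl) as P.
  replace (l * a + (1 - l) * cm) with (cm - l * (cm - a)) in P by ring.
  rewrite El in P. replace (cm - (cm - b)) with b in P by ring.
  pose proof (Hcm a). nra.
Qed.
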